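(* A forward complete system $\dot x(t)=f(x_t,u(t))$, $y(t)=h(x_t)$ as in the context is OL-IOS if and only if there exist $\beta\in\mathcal{KL}$ and $\rho,\gamma\in\mathcal N$ such that $|y(t,\xi,u)|\le\beta\big(|h(\xi)|,\ \tfrac{t}{1+\rho(\|\xi\|_{\mathcal X})}\big)+\gamma(\|u\|)$ for all $t\ge0$, all $\xi\in\mathcal X^n$ and all $u\in\mathcal M$.
   Context: Fix $\theta>0$; $\mathcal X^k=C([-\theta,0],\mathbb R^k)$ with norm $\|\xi\|_{\mathcal X}=\max_{s\in[-\theta,0]}|\xi(s)|$; $x_t(s)=x(t+s)$. $\mathcal M$: measurable locally essentially bounded $u:\mathbb R_{\ge0}\to\mathbb R^m$, $\|u\|$ the essential supremum on $[0,\infty)$. Classes: $\mathcal N$ = continuous nondecreasing $\sigma:\mathbb R_{\ge0}\to\mathbb R_{\ge0}$, $\sigma(0)=0$; $\mathcal K$ = strictly increasing ones; $\mathcal{KL}$ = $\beta(s,t)$ of class $\mathcal K$ in $s$ and decreasing to $0$ as $t\to\infty$. System: $f:\mathcal X^n\times\mathbb R^m\to\mathbb R^n$ locally Lipschitz, mapping bounded sets to bounded sets; $h:\mathcal X^n\to\mathbb R^p$ continuous with $|h(\xi)|\le\pi(\|\xi\|_{\mathcal X})$ for some $\pi\in\mathcal N$; $x(\cdot,\xi,u)$ unique maximal solution with initial history $\xi$, $y(t,\xi,u)=h(x_t^{\xi,u})$. Forward complete: all solutions exist for all $t\ge0$. IOS: forward complete and there exist $\beta\in\mathcal{KL},\gamma\in\mathcal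 N$ with $|y(t,\xi,u)|\le\beta(\|\xi\|_{\mathcal X},t)+\gamma(\|u\|)$ for all $t\ge0,\xi,u$. OL-IOS: IOS and additionally there is $\sigma\in\mathcal N$ with $|y(t,\xi,u)|\le\max\{\sigma(|h(\xi)|),\sigma(\|u\|)\}$ for all $t\ge0,\xi,u$. *)

(* Defs.v *)
From HB Require Import structures.
From mathcomp Require Import all_boot all_order all_algebra.
From mathcomp Require Import all_classical all_reals all_analysis ess_sup_inf.
Set Implicit Arguments.
Unset Strict Implicit.
Unset Printing Implicit Defensive.
Import Order.TTheory GRing.Theory Num.Theory.
Import numFieldNormedType.Exports.
Local Open Scope classical_set_scope.
Local Open Scope ring_scope.

Section Defs.
Variable R : realType.

Definition enorm (k : nat) (x : 'rV[R]_k) : R :=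
  Num.sqrt (\sum_(i < k) x ord0 i ^+ 2).

Definition hdom (theta : R) : set R := [set s | - theta <= s <= 0].

(* Elements of X^k = C([-theta,0], R^k) are represented by functions
   R -> R^k, continuous on [-theta,0]; only their values on [-theta,0]
   matter (see [functional_on] below). *)
Definition inX (theta : R) (k : nat) (xi : R -> 'rV[R]_k) : Prop :=
  {within hdom theta, continuous xi}.

Definition xnorm (theta : R) (k : nat) (xi : R -> 'rV[R]_k) : R :=
  sup [set enorm (xi s) | s in hdom theta].

Definition seg (k : nat) (x : R -> 'rV[R]_k) (t : R) : R -> 'rV[R]_k :=
  fun s => x (t + s).

Definition classN (s : R -> R) : Prop :=
  {within [set x | 0 <= x], continuous s} /\ s 0 = 0 /\
  (forall x, 0 <= x -> 0 <= s x) /\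
  (forall x y, 0 <= x -> x <= y -> s x <= s y).

Definition classK (s : R -> R) : Prop :=
  classN s /\ (forall x y, 0 <= x -> x < y -> s x < s y).

Definition classKL (b : R -> R -> R) : Prop :=
  (forall t, 0 <= t -> classK (fun s => b s t)) /\
  (forall s, 0 <= s ->
     (forall t1 t2, 0 <= t1 -> t1 <= t2 -> b s t2 <= b s t1) /\
     (b s t @[t --> +oo] --> 0)).

(* Inputs: the class M of measurable, locally essentially bounded
   u : R_{>=0} -> R^m (values on negative times are irrelevant). *)
Definition inM (m : nat) (u : R -> 'rV[R]_m) : Prop :=
  (forall i : 'I_m, measurable_fun [set s : R | 0 <= s] (fun s => u s ord0 i)) /\
  (forall T, 0 <= T -> exists K : R,
     {ae (@lebesgue_measure R), forall s, 0 <= s <= T -> enorm (u s) <= K}).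

Definition unorm (m : nat) (u : R -> 'rV[R]_m) : \bar R :=
  ess_sup (@lebesgue_measure R)
    (fun s => (if 0 <= s then enorm (u s) else 0)%:E).

(* x is a solution on [0,+oo) of  x'(t) = f(x_t, u(t)),  x_0 = xi,
   in the Caratheodory (integral) sense. *)
Definition is_solution (theta : R) (n m : nat)
  (f : (R -> 'rV[R]_n) -> 'rV[R]_m -> 'rV[R]_n)
  (xi : R -> 'rV[R]_n) (u : R -> 'rV[R]_m) (x : R -> 'rV[R]_n) : Prop :=
  (forall s, hdom theta s -> x s = xi s) /\
  {within [set s | - theta <= s], continuous x} /\
  (forall t, 0 <= t -> forall i : 'I_n,
     (@lebesgue_measure R).-integrable `[0, t]
        (fun s => (f (seg x s) (u s) ord0 i)%:E) /\
     x t ord0 i = xi 0 ord0 i +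
        Rintegral (@lebesgue_measure R) `[0, t] (fun s => f (seg x s) (u s) ord0 i)).

(* A map on X^k: depends only on the restriction to [-theta,0]. *)
Definition functional_on (theta : R) (k : nat) (A : Type)
  (g : (R -> 'rV[R]_k) -> A) : Prop :=
  forall xi xi', (forall s, hdom theta s -> xi s = xi' s) -> g xi = g xi'.

Definition diffX (k : nat) (a b : R -> 'rV[R]_k) : R -> 'rV[R]_k :=
  fun s => a s - b s.

Definition loc_lipschitz (theta : R) (n m : nat)
  (f : (R -> 'rV[R]_n) -> 'rV[R]_m -> 'rV[R]_n) : Prop :=
  forall xi0 v0, inX theta xi0 -> exists delta L : R, 0 < delta /\
    forall xi xi' v v', inX theta xi -> inX theta xi' ->
      xnorm theta (diffX xi xi0) < delta -> xnorm theta (diffX xi' xi0) < delta ->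
      enorm (v - v0) < delta -> enorm (v' - v0) < delta ->
      enorm (f xi v - f xi' v') <= L * (xnorm theta (diffX xi xi') + enorm (v - v')).

Definition bounded_to_bounded (theta : R) (n m : nat)
  (f : (R -> 'rV[R]_n) -> 'rV[R]_m -> 'rV[R]_n) : Prop :=
  forall M : R, exists K : R, forall xi v, inX theta xi ->
    xnorm theta xi <= M -> enorm v <= M -> enorm (f xi v) <= K.

Definition continuous_X (theta : R) (n p : nat) (h : (R -> 'rV[R]_n) -> 'rV[R]_p)
  : Prop :=
  forall xi0, inX theta xi0 -> forall eps : R, 0 < eps -> exists delta : R,
    0 < delta /\ forall xi, inX theta xi -> xnorm theta (diffX xi xi0) < delta ->
      enorm (h xi - h xi0) < eps.

Definition system_assumptions (theta : R) (n m p : nat)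
  (f : (R -> 'rV[R]_n) -> 'rV[R]_m -> 'rV[R]_n)
  (h : (R -> 'rV[R]_n) -> 'rV[R]_p) : Prop :=
  0 < theta /\
  (forall v, functional_on theta (fun xi => f xi v)) /\
  loc_lipschitz theta f /\ bounded_to_bounded theta f /\
  functional_on theta h /\ continuous_X theta h /\
  (exists pi, classN pi /\ forall xi, inX theta xi ->
     enorm (h xi) <= pi (xnorm theta xi)).

Definition forward_complete (theta : R) (n m : nat)
  (f : (R -> 'rV[R]_n) -> 'rV[R]_m -> 'rV[R]_n) : Prop :=
  forall xi u, inX theta xi -> inM u -> exists x, is_solution theta f xi u x.

(* IOS; y(t,xi,u) = h(x_t) for the (unique) solution x. The estimate is
   only required when ||u|| < oo (otherwise it is trivially true). *)
Definition IOS (theta : R) (n m p : nat)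
  (f : (R -> 'rV[R]_n) -> 'rV[R]_m -> 'rV[R]_n)
  (h : (R -> 'rV[R]_n) -> 'rV[R]_p) : Prop :=
  forward_complete theta f /\
  exists beta gamma, classKL beta /\ classN gamma /\
    forall xi u x r, inX theta xi -> inM u -> unorm u = r%:E ->
      is_solution theta f xi u x -> forall t, 0 <= t ->
      enorm (h (seg x t)) <= beta (xnorm theta xi) t + gamma r.

Definition OL_IOS (theta : R) (n m p : nat)
  (f : (R -> 'rV[R]_n) -> 'rV[R]_m -> 'rV[R]_n)
  (h : (R -> 'rV[R]_n) -> 'rV[R]_p) : Prop :=
  IOS theta f h /\
  exists sigma, classN sigma /\
    forall xi u x r, inX theta xi -> inM u -> unorm u = r%:E ->
      is_solution theta f xi u x -> forall t, 0 <= t ->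
      enorm (h (seg x t)) <= Num.max (sigma (enorm (h xi))) (sigma r).

End Defs.

(* Main.v *)
Require Import Defs.
From mathcomp Require Import all_boot all_order all_algebra.
From mathcomp Require Import all_classical all_reals all_analysis ess_sup_inf.
From mathcomp Require Import lra.
Import Order.TTheory GRing.Theory Num.Theory.
Import numFieldNormedType.Exports.
Set Implicit Arguments.
Unset Strict Implicit.
Local Open Scope classical_set_scope.
Local Open Scope ring_scope.

Section Aux.
Context {R : realType}.

Lemma enorm_ge0 {k} (x : 'rV[R]_k) : 0 <= enorm x.
Proof. exact: sqrtr_ge0. Qed.

Lemma leb_gt0 : (0 < (@lebesgue_measure R) [set: R])%E.
Proof.
apply: (@lt_le_trans _ _ ((@lebesgue_measure R) `[0%R, 1%R])).
  by rewrite lebesgue_measure_itv /= lte_fin ltr01 sube0 lte_fin ltr01.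
by apply: le_measure => //; rewrite inE.
Qed.

Lemma unorm_ge0 m (u : R -> 'rV[R]_m) r : unorm u = r%:E -> 0 <= r.
Proof.
move=> H; rewrite -lee_fin -H; apply: ess_sup_ger; first exact: leb_gt0.
by move=> t; rewrite lee_fin; case: ifP => // _; apply: enorm_ge0.
Qed.

Lemma xnorm_ge0 theta k (xi : R -> 'rV[R]_k) : 0 < theta -> 0 <= xnorm theta xi.
Proof.
move=> th; rewrite /xnorm.
have [hs|hs] := pselect (has_sup [set enorm (xi s) | s in hdom theta]).
  have := enorm_ge0 (xi 0). move=> /le_trans; apply. apply: sup_upper_bound => //.
  exists 0 => //; rewrite /hdom /= lexx andbT oppr_le0; exact: ltW.
by rewrite sup_out.
Qed.

Lemma lim0P (f : R -> R) : (forall t, 0 <= f t) ->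
  (f t @[t --> +oo] --> 0) <-> (forall e, 0 < e -> exists T, forall t, T <= t -> f t <= e).
Proof.
move=> f0; split.
  move=> /cvgrPdist_le H e e0; have [M [_ HM]] := H e e0.
  exists (M + 1) => t Mt; have := HM t; rewrite sub0r normrN ger0_norm //.
  apply; lra.
move=> H; apply/cvgrPdist_le => e e0; have [T HT] := H e e0.
exists T; split; first exact: num_real.
move=> t Tt; rewrite sub0r normrN ger0_norm //; apply: HT; exact: ltW.
Qed.

End Aux.
Section Ramp.
Context {R : realType}.

Definition clamp (u : R) : R := Num.min 1 (Num.max 0 u).

Lemma clamp_ge0 u : 0 <= clamp u.
Proof. by rewrite /clamp le_min ler01 le_max lexx. Qed.
Lemma clamp_le1 u : clamp u <= 1.
Proof. by rewrite /clamp ge_min lexx. Qed.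
Lemma clamp0 u : u <= 0 -> clamp u = 0.
Proof. by move=> h; rewrite /clamp (max_l h) (min_r ler01). Qed.
Lemma clamp1 u : 1 <= u -> clamp u = 1.
Proof. by move=> h; rewrite /clamp max_r ?(le_trans ler01 h) // min_l. Qed.
Lemma clamp_le u v : u <= v -> clamp u <= clamp v.
Proof.
move=> h; rewrite /clamp; apply: le_min2 => //; apply: le_max2 => //.
Qed.
Lemma clamp_cont : continuous clamp.
Proof.
move=> x; apply: (@continuous_min R R (fun _ => 1) (fun u => Num.max 0 u)).
  exact: cst_continuous.
apply: (@continuous_max R R (fun _ => 0) (fun u => u)).
  exact: cst_continuous.
exact: cvg_id.
Qed.

Definition rterm (c : nat -> R) (s : R) k := c k * clamp (s - k%:R).

Definition RS (c : nat -> R) (s : R) : R :=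
  \sum_(0 <= k < (Num.trunc s).+1) rterm c s k.

Lemma RS_ext c s M L : s <= M%:R -> (M <= L)%N ->
  \sum_(0 <= k < L) rterm c s k = \sum_(0 <= k < M) rterm c s k.
Proof.
move=> sM ML; rewrite (big_cat_nat (leq0n M) ML) /=.
rewrite [X in _ + X](_ : _ = 0) ?addr0 //.
rewrite big_nat_cond; apply: big1 => k /andP[/andP[Mk _] _].
by rewrite /rterm clamp0 ?mulr0 // subr_le0 (le_trans sM) // ler_nat.
Qed.

Lemma RS_eq c s M : s <= M%:R -> RS c s = \sum_(0 <= k < M) rterm c s k.
Proof.
move=> sM; rewrite /RS -(@RS_ext c s M (maxn M (Num.trunc s).+1)) //.
  symmetry; apply: RS_ext; last exact: leq_maxr.
  exact: ltW (truncnS_gt s).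
exact: leq_maxl.
Qed.

Lemma sum_cont (F : nat -> R -> R) N x :
  (forall k, {for x, continuous (F k)}) ->
  {for x, continuous (fun s => \sum_(0 <= k < N) F k s)}.
Proof.
move=> H; elim: N => [|N IH].
  have -> : (fun s => \sum_(0 <= k < 0) F k s) = (fun _ => 0).
    by apply/funext => s; rewrite big_geq.
  exact: cst_continuous.
have -> : (fun s => \sum_(0 <= k < N.+1) F k s) =
   (fun s => \sum_(0 <= k < N) F k s) + F N.
  by apply/funext => s; rewrite big_nat_recr.
exact: continuousD.
Qed.

Lemma RS_cont c : continuous (RS c).
Proof.
move=> s0.
have e : \forall s \near s0, \sum_(0 <= k < (Num.trunc s0).+2) rterm c s k = RS c s.
  have lt0 : s0 < ((Num.trunc s0).+2)%:R.
    apply: lt_trans (truncnS_gt s0) _; rewrite ltr_nat //.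
  have := lt_nbhsl lt0.
  apply: filterS => s hs; symmetry; apply: RS_eq; exact: ltW.
rewrite /prop_for /continuous_at.
have -> : RS c s0 = \sum_(0 <= k < (Num.trunc s0).+2) rterm c s0 k.
  apply: RS_eq; apply: le_trans (ltW (truncnS_gt s0)) _; rewrite ler_nat //.
apply: cvg_trans (near_eq_cvg e) _.
apply: sum_cont => k; rewrite /rterm.
apply: continuousM; first exact: cst_continuous.
apply: continuous_comp; last exact: clamp_cont.
apply: continuousD; first exact: cvg_id.
exact: cst_continuous.
Unshelve. all: by end_near.
Qed.

Lemma RS0 c : RS c 0 = 0.
Proof.
rewrite (@RS_eq c 0 0) ?big_geq //.
Qed.

Lemma RS_ge0 c s : (forall k, 0 <= c k) -> 0 <= RS c s.
Proof.
move=> c0; rewrite /RS; apply: sumr_ge0 => k _; apply: mulr_ge0 => //; exact: clamp_ge0.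
Qed.

Lemma RS_le c s1 s2 : (forall k, 0 <= c k) -> s1 <= s2 -> RS c s1 <= RS c s2.
Proof.
move=> c0 le12; set M := (Num.trunc s2).+1.
have h2 : s2 <= M%:R by exact: ltW (truncnS_gt s2).
rewrite (@RS_eq c s2 M h2) (@RS_eq c s1 M (le_trans le12 h2)).
apply: ler_sum => k _; apply: ler_wpM2l => //; apply: clamp_le; lra.
Qed.

Lemma RS_lb c s j : (forall k, 0 <= c k) -> (j.+1)%:R <= s -> c j <= RS c s.
Proof.
move=> c0 js; set M := (Num.trunc s).+1.
have h : s <= M%:R by exact: ltW (truncnS_gt s).
have jM : (j < M)%N.
  rewrite -(ltr_nat R); apply: lt_le_trans _ h; apply: lt_le_trans js.
  by rewrite ltr_nat.
rewrite (@RS_eq c s M h) (big_cat_nat (leq0n j) (ltnW jM)) /=.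
rewrite [X in _ + X]big_ltn //.
have hj : rterm c s j = c j.
  by rewrite /rterm clamp1 ?mulr1 // lerBrDr addrC natr1.
have hA : 0 <= \sum_(0 <= k < j) rterm c s k.
  apply: sumr_ge0 => k _; apply: mulr_ge0 => //; exact: clamp_ge0.
have hB : 0 <= \sum_(j.+1 <= k < M) rterm c s k.
  apply: sumr_ge0 => k _; apply: mulr_ge0 => //; exact: clamp_ge0.
rewrite hj; lra.
Qed.

Lemma RS_ub c s M : (forall k, 0 <= c k) -> s <= M%:R ->
  RS c s <= \sum_(0 <= k < M) c k.
Proof.
move=> c0 h; rewrite (@RS_eq c s M h); apply: ler_sum => k _.
rewrite /rterm -[X in _ <= X]mulr1; apply: ler_wpM2l => //; exact: clamp_le1.
Qed.

End Ramp.
Section Comp.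
Context {R : realType}.
Lemma within_comp (A B : set R) (f g : R -> R) :
  {within A, continuous f} -> {within B, continuous g} ->
  (forall x, A x -> B (f x)) -> {within A, continuous (g \o f)}.
Proof.
move=> /subspace_continuousP cf /subspace_continuousP cg AB.
apply/subspace_continuousP => x Ax.
have Bfx := AB x Ax.
have H1 : (f @ within A (nbhs x)) `=>` within B (nbhs (f x)).
  move=> P /= hP.
  have h1 := cf x Ax _ hP.
  have h2 : within A (nbhs x) (f @^-1` B).
    by apply: nearW => z Az; apply: AB.
  rewrite /= in h1.
  by apply: filterS2 h1 h2 => z H1 H2; apply: H1.
exact: cvg_comp H1 (cg _ Bfx).
Qed.
End Comp.

Section Helpers.
Context {R : realType}.

Lemma div_le_anti (t a b : R) : 0 <= t -> 0 < a -> a <= b -> t / b <= t / a.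
Proof.
move=> t0 a0 ab; apply: ler_wpM2l => //.
by rewrite lef_pV2 // posrE // (lt_le_trans a0 ab).
Qed.

Lemma lim_to (f : R -> R) : f t @[t --> +oo] --> 0 ->
  forall e, 0 < e -> exists T, forall t, T <= t -> f t <= e.
Proof.
move=> /cvgrPdist_le H e e0; have [M [_ HM]] := H e e0.
exists (M + 1) => t Mt; have := HM t; rewrite sub0r normrN.
move=> h; apply: le_trans (ler_norm _) (h _); lra.
Qed.

Lemma lim_of (f : R -> R) : (forall t, 0 <= t -> 0 <= f t) ->
  (forall e, 0 < e -> exists T, forall t, T <= t -> f t <= e) ->
  f t @[t --> +oo] --> 0.
Proof.
move=> f0 H; apply/cvgrPdist_le => e e0; have [T HT] := H e e0.
exists (Num.max T 0); split; first exact: num_real.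
move=> t; rewrite gt_max => /andP[Tt t0].
rewrite sub0r normrN ger0_norm; last exact: f0 (ltW t0).
apply: HT; exact: ltW.
Qed.

Lemma wD (A : set R) (f g : R -> R) : {within A, continuous f} ->
  {within A, continuous g} -> {within A, continuous (fun x => f x + g x)}.
Proof. by move=> cf cg x; exact: (continuousD (cf x) (cg x)). Qed.

Lemma wmin (A : set R) (f : R -> R) c : {within A, continuous f} ->
  {within A, continuous (fun x => Num.min (f x) c)}.
Proof. by move=> cf x; apply: (continuous_min (cf x)); apply: cst_continuous. Qed.

Lemma lin_cont (k : R) : continuous (fun a : R => a * k).
Proof.
move=> x; apply: (@continuousM R R (fun a => a) (fun _ => k)); first exact: cvg_id.
exact: cst_continuous.
Qed.

Lemma RS_lec (c1 c2 : nat -> R) s : (forall k, c1 k <= c2 k) -> RS c1 s <= RS c2 s.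
Proof.
move=> h; rewrite /RS; apply: ler_sum => k _; rewrite /rterm.
apply: ler_wpM2r => //; exact: clamp_ge0.
Qed.

Lemma classN_ge0 {f : R -> R} {x} : classN f -> 0 <= x -> 0 <= f x.
Proof. by case=> _ [_ [h _]]; apply: h. Qed.
Lemma classN_le {f : R -> R} {x y} : classN f -> 0 <= x -> x <= y -> f x <= f y.
Proof. by case=> _ [_ [_ h]]; apply: h. Qed.
Lemma classN0 {f : R -> R} : classN f -> f 0 = 0.
Proof. by case=> _ [h _]. Qed.
Lemma classN_cont {f : R -> R} : classN f -> {within [set x | 0 <= x], continuous f}.
Proof. by case. Qed.

Lemma classN_add (f g : R -> R) : classN f -> classN g -> classN (fun x => f x + g x).
Proof.
move=> hf hg; split; first by apply: wD; apply: classN_cont.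
split; first by rewrite (classN0 hf) (classN0 hg) addr0.
split; first by move=> x x0; apply: addr_ge0; [exact: classN_ge0 hf x0|exact: classN_ge0 hg x0].
move=> x y x0 xy; apply: lerD; [exact: classN_le hf x0 xy|exact: classN_le hg x0 xy].
Qed.

End Helpers.

Section PartA.
Context {R : realType}.
Variables (bh : R -> R -> R) (rho pi : R -> R).
Hypotheses (Hb : classKL bh) (Hr : classN rho) (Hp : classN pi).

Let bhK t : 0 <= t -> classK (fun s => bh s t).
Proof. by move=> t0; case: Hb => h _; apply: h. Qed.
Let bh_ge0 s t : 0 <= s -> 0 <= t -> 0 <= bh s t.
Proof. by move=> s0 t0; have [hN _] := bhK t0; exact: (classN_ge0 hN s0). Qed.
Let bh_les s1 s2 t : 0 <= s1 -> s1 <= s2 -> 0 <= t -> bh s1 t <= bh s2 t.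
Proof. by move=> s0 s12 t0; have [hN _] := bhK t0; exact: (classN_le hN s0 s12). Qed.
Let bh_let s t1 t2 : 0 <= s -> 0 <= t1 -> t1 <= t2 -> bh s t2 <= bh s t1.
Proof. by move=> s0 t0 t12; case: Hb => _ h; have [h1 _] := h s s0; apply: h1. Qed.
Let bh_lim s : 0 <= s -> bh s t @[t --> +oo] --> 0.
Proof. by move=> s0; case: Hb => _ h; have [_ h2] := h s s0. Qed.
Let rho_ge0 s : 0 <= s -> 0 <= rho s.
Proof. exact: classN_ge0 Hr. Qed.
Let pi_ge0 s : 0 <= s -> 0 <= pi s.
Proof. exact: classN_ge0 Hp. Qed.
Let den_gt0 s : 0 <= s -> 0 < 1 + rho s.
Proof. move=> s0; have := rho_ge0 s0; lra. Qed.

Definition wA s t := bh (pi s) (t / (1 + rho s)).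

Lemma wA_ge0 s t : 0 <= s -> 0 <= t -> 0 <= wA s t.
Proof.
move=> s0 t0; apply: bh_ge0; first exact: pi_ge0.
by apply: divr_ge0 => //; apply: ltW; apply: den_gt0.
Qed.

Lemma wA_les s1 s2 t : 0 <= s1 -> s1 <= s2 -> 0 <= t -> wA s1 t <= wA s2 t.
Proof.
move=> s0 s12 t0; have s20 : 0 <= s2 by apply: le_trans s12.
rewrite /wA; apply: (@le_trans _ _ (bh (pi s1) (t / (1 + rho s2)))).
  apply: bh_let; first exact: pi_ge0.
    by apply: divr_ge0 => //; apply: ltW; apply: den_gt0.
  apply: div_le_anti => //; first exact: den_gt0.
  by rewrite lerD2l; apply: (classN_le Hr s0 s12).
apply: bh_les; first exact: pi_ge0.
  exact: (classN_le Hp s0 s12).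
by apply: divr_ge0 => //; apply: ltW; apply: den_gt0.
Qed.

Lemma wA_let s t1 t2 : 0 <= s -> 0 <= t1 -> t1 <= t2 -> wA s t2 <= wA s t1.
Proof.
move=> s0 t0 t12; rewrite /wA; apply: bh_let; first exact: pi_ge0.
  by apply: divr_ge0 => //; apply: ltW; apply: den_gt0.
apply: ler_wpM2r => //; rewrite invr_ge0; apply: ltW; exact: den_gt0.
Qed.

Lemma wA_lim s : 0 <= s -> forall e, 0 < e -> exists T, forall t, T <= t -> wA s t <= e.
Proof.
move=> s0 e e0; have [T0 HT] := lim_to (bh_lim (pi_ge0 s0)) e0.
exists (Num.max T0 0 * (1 + rho s)) => t Tt; rewrite /wA; apply: HT.
have d0 := den_gt0 s0.
rewrite ler_pdivlMr //; apply: le_trans Tt.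
apply: ler_wpM2r; first exact: ltW.
by rewrite le_max lexx.
Qed.


Definition VA s t := wA 1 t + RS (fun k => wA (k.+2)%:R t) s.

Lemma VA_ge0 s t : 0 <= t -> 0 <= VA s t.
Proof.
move=> t0; apply: addr_ge0; first exact: wA_ge0.
by apply: RS_ge0 => k; apply: wA_ge0.
Qed.

Lemma VA_let s t1 t2 : 0 <= t1 -> t1 <= t2 -> VA s t2 <= VA s t1.
Proof.
move=> t0 t12; apply: lerD; first exact: wA_let.
by apply: RS_lec => k; apply: wA_let.
Qed.

Lemma VA_ge_w s t : 0 <= s -> 0 <= t -> wA s t <= VA s t.
Proof.
move=> s0 t0; rewrite /VA.
have hRS : 0 <= RS (fun k => wA (k.+2)%:R t) s by apply: RS_ge0 => k; apply: wA_ge0.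
have sS := truncnS_gt s.
case E : (Num.trunc s) => [|j].
  rewrite E in sS.
  apply: le_trans (wA_les s0 (ltW sS) t0) _; lra.
have js : (j.+1)%:R <= s by rewrite -E truncn_le.
have := RS_lb (c := fun k => wA (k.+2)%:R t) (s := s) (j := j) (fun k => wA_ge0 (ler0n _ _) t0) js.
rewrite E in sS.
have := wA_les s0 (ltW sS) t0.
have := wA_ge0 ler01 t0.
lra.
Qed.


Lemma VA_lim s : 0 <= s -> forall e, 0 < e -> exists T, forall t, T <= t -> VA s t <= e.
Proof.
move=> s0 e e0; set M := (Num.trunc s).+1.
have sM : s <= M%:R by exact: ltW (truncnS_gt s).
have M1 : (0:R) < (M.+1)%:R by rewrite ltr0Sn.
have [T HT] := wA_lim (ler0n R M.+1) (divr_gt0 e0 M1).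
exists (Num.max T 0) => t; rewrite ge_max => /andP[Tt t0].
have hx := HT t Tt.
set x := wA (M.+1)%:R t in hx.
have h1 : wA 1 t <= x by apply: wA_les => //; rewrite ler1n.
have h2 : RS (fun k => wA (k.+2)%:R t) s <= x *+ M.
  apply: le_trans (RS_ub _ sM) _ => [k|]; first by apply: wA_ge0.
  apply: le_trans (_ : _ <= \sum_(0 <= k < M) x) _; last by rewrite sumr_const_nat subn0.
  apply: ler_sum_nat => k /andP[_ kM].
  by apply: wA_les => //; rewrite ler_nat.
have : x *+ M.+1 <= e by rewrite -mulr_natr -ler_pdivlMr.
rewrite mulrS /VA; lra.
Qed.

Lemma VA_cont t : continuous (fun s => VA s t).
Proof.
move=> s; apply: (continuousD (f := fun _ => wA 1 t)); first exact: cst_continuous.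
exact: RS_cont.
Qed.

Definition betaA s t := Num.min (bh (pi s) 0) (VA s t) + s / (1 + t).

Lemma betaA_KL : classKL betaA.
Proof.
split.
  move=> t t0; have t1 : 0 < 1 + t by lra.
  split; first split.
  - rewrite /betaA; apply: wD; last first.
      apply: continuous_subspaceT; exact: lin_cont.
    have c1 : {within [set x | 0 <= x], continuous (fun s => bh (pi s) 0)}.
      have := within_comp (classN_cont Hp) (classN_cont (proj1 (bhK (lexx 0)))).
      by move=> /(_ (fun y y0 => classN_ge0 Hp y0)); apply.
    have c2 : {within [set x | 0 <= x], continuous (fun s => VA s t)}.
      apply: continuous_subspaceT; exact: VA_cont.
    move=> x; exact: (continuous_min (c1 x) (c2 x)).
  - split.
      rewrite /betaA (classN0 Hp) (classN0 (proj1 (bhK (lexx 0)))) mul0r addr0.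
      by apply/min_idPl; apply: VA_ge0.
    split.
      move=> x x0; apply: addr_ge0; last exact: divr_ge0 (ltW t1).
      by rewrite le_min; apply/andP; split; [apply: bh_ge0 => //; apply: pi_ge0|apply: VA_ge0].
    move=> x y x0 xy; apply: lerD; last by apply: ler_wpM2r => //; rewrite invr_ge0 ltW.
    apply: le_min2.
      apply: bh_les => //; first exact: pi_ge0.
      exact: classN_le Hp x0 xy.
    by apply: lerD => //; apply: RS_le => // k; apply: wA_ge0.
  move=> x y x0 xy; apply: ler_ltD.
    apply: le_min2.
      apply: bh_les => //; first exact: pi_ge0.
      exact: classN_le Hp x0 (ltW xy).
    by apply: lerD => //; apply: RS_le => //; [move=> k; apply: wA_ge0|apply: ltW].
  by rewrite ltr_pM2r // invr_gt0.
move=> s s0; split.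
  move=> t1 t2 t10 t12; apply: lerD.
    by apply: le_min2 => //; apply: VA_let.
  apply: div_le_anti => //; lra.
apply: lim_of.
  move=> t t0; apply: addr_ge0; last by apply: divr_ge0 => //; lra.
  by rewrite le_min; apply/andP; split; [apply: bh_ge0 => //; apply: pi_ge0|apply: VA_ge0].
move=> e e0; have e2 : 0 < e / 2 by apply: divr_gt0.
have [T HT] := VA_lim s0 e2.
exists (Num.max T (Num.max 0 (2 * s / e))) => t; rewrite !ge_max => /andP[Tt /andP[t0 st]].
have h1 := HT t Tt.
have h2 : Num.min (bh (pi s) 0) (VA s t) <= VA s t by rewrite ge_min lexx orbT.
have h3 : s / (1 + t) <= e / 2.
  rewrite ler_pdivrMr; last lra.
  move: st; rewrite ler_pdivrMr // => st.
  have : 0 <= e * t by apply: mulr_ge0; lra.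
  nra.
rewrite /betaA; lra.
Qed.

Lemma betaA_bound s t a : 0 <= s -> 0 <= t -> 0 <= a -> a <= pi s ->
  bh a (t / (1 + rho s)) <= betaA s t.
Proof.
move=> s0 t0 a0 ap.
have tau0 : 0 <= t / (1 + rho s) by apply: divr_ge0 => //; apply: ltW; apply: den_gt0.
have h1 : bh a (t / (1 + rho s)) <= wA s t by apply: bh_les.
have h2 : wA s t <= bh (pi s) 0 by apply: bh_let => //; apply: pi_ge0.
have h3 := VA_ge_w s0 t0.
have h4 : 0 <= s / (1 + t) by apply: divr_ge0 => //; lra.
rewrite /betaA; apply: le_trans h1 _.
rewrite -[wA s t]addr0; apply: lerD => //.
by rewrite le_min h2 h3.
Qed.

End PartA.

Section KLfacts.
Context {R : realType}.
Variable b : R -> R -> R.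
Hypothesis Hb : classKL b.
Lemma KL_K t : 0 <= t -> classK (fun s => b s t).
Proof. by move=> t0; case: Hb => h _; apply: h. Qed.
Lemma KL_ge0 s t : 0 <= s -> 0 <= t -> 0 <= b s t.
Proof. by move=> s0 t0; have [hN _] := KL_K t0; exact: (classN_ge0 hN s0). Qed.
Lemma KL_les s1 s2 t : 0 <= s1 -> s1 <= s2 -> 0 <= t -> b s1 t <= b s2 t.
Proof. by move=> s0 s12 t0; have [hN _] := KL_K t0; exact: (classN_le hN s0 s12). Qed.
Lemma KL_let s t1 t2 : 0 <= s -> 0 <= t1 -> t1 <= t2 -> b s t2 <= b s t1.
Proof. by move=> s0 t0 t12; case: Hb => _ h; have [h1 _] := h s s0; apply: h1. Qed.
Lemma KL_lim s : 0 <= s -> b s t @[t --> +oo] --> 0.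
Proof. by move=> s0; case: Hb => _ h; have [_ h2] := h s s0. Qed.
Lemma KL_cont t : 0 <= t -> {within [set x | 0 <= x], continuous (fun s => b s t)}.
Proof. by move=> t0; have [hN _] := KL_K t0; exact: classN_cont hN. Qed.
Lemma KL_0 t : 0 <= t -> b 0 t = 0.
Proof. by move=> t0; have [hN _] := KL_K t0; exact: classN0 hN. Qed.
End KLfacts.

Section PartB.
Context {R : realType}.
Variables (beta : R -> R -> R) (sigma : R -> R).
Hypotheses (Hb : classKL beta) (Hs : classN sigma).

Lemma Tex (k : nat) : exists T : R, 0 <= T /\ beta (k.+2)%:R T <= (k.+1)%:R^-1.
Proof.
have e0 : (0:R) < (k.+1)%:R^-1 by rewrite invr_gt0 ltr0Sn.
have [T0 HT] := lim_to (KL_lim Hb (ler0n R k.+2)) e0.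
exists (Num.max T0 0); split; first by rewrite le_max lexx orbT.
by apply: HT; rewrite le_max lexx.
Qed.

Definition Tseq k : R := proj1_sig (cid (Tex k)).
Lemma Tseq_ge0 k : 0 <= Tseq k.
Proof. by rewrite /Tseq; case: cid => T [] . Qed.
Lemma Tseq_spec k : beta (k.+2)%:R (Tseq k) <= (k.+1)%:R^-1.
Proof. by rewrite /Tseq; case: cid => T []. Qed.

Definition rhoB := RS Tseq.

Lemma rhoB_N : classN rhoB.
Proof.
split; first by apply: continuous_subspaceT; exact: RS_cont.
split; first exact: RS0.
split; first by move=> x _; apply: RS_ge0; exact: Tseq_ge0.
by move=> x y _ xy; apply: RS_le => //; exact: Tseq_ge0.
Qed.

Lemma rhoB_ge0 s : 0 <= rhoB s.
Proof. by apply: RS_ge0; exact: Tseq_ge0. Qed.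

Lemma unif e : 0 < e -> exists tau0, 0 <= tau0 /\
  forall s tau, 0 <= s -> tau0 <= tau -> beta s ((1 + rhoB s) * tau) <= e.
Proof.
move=> e0; set N := (Num.trunc e^-1).+1.
have eN := truncnS_gt e^-1; rewrite -/N in eN.
have [T1 HT1] := lim_to (KL_lim Hb (ler0n R N)) e0.
exists (Num.max 1 T1); split; first by rewrite le_max ler01.
move=> s tau s0; rewrite ge_max => /andP[t1 tT].
have r0 := rhoB_ge0 s.
have tau0 : 0 <= tau by lra.
have tt : tau <= (1 + rhoB s) * tau.
  have : 0 <= rhoB s * tau by apply: mulr_ge0.
  rewrite mulrDl mul1r; lra.
have [Ns|sN] := leP (N%:R) s; last first.
  apply: le_trans (KL_les Hb s0 (ltW sN) (le_trans tau0 tt)) _.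
  apply: le_trans (KL_let Hb (ler0n _ _) tau0 tt) _.
  exact: HT1.
have sS := truncnS_gt s.
have Nj : (N < (Num.trunc s).+1)%N by rewrite -(ltr_nat R); apply: le_lt_trans sS.
case E : (Num.trunc s) => [|j].
  by rewrite E in Nj.
rewrite E in Nj sS.
have js : (j.+1)%:R <= s by rewrite -E truncn_le.
have hT := RS_lb (c := Tseq) (s := s) (j := j) Tseq_ge0 js.
rewrite -/rhoB in hT.
have hT2 : Tseq j <= (1 + rhoB s) * tau.
  have : 0 <= rhoB s * (tau - 1) by apply: mulr_ge0; lra.
  rewrite mulrDl mul1r mulrBr mulr1; lra.
apply: le_trans (KL_les Hb s0 (ltW sS) (le_trans tau0 tt)) _.
apply: le_trans (KL_let Hb (ler0n _ _) (Tseq_ge0 j) hT2) _.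
apply: le_trans (Tseq_spec j) _.
have N0 : (0:R) < N%:R by rewrite ltr0Sn.
apply: le_trans (_ : _ <= N%:R^-1) _.
  rewrite lef_pV2 ?posrE ?ltr0Sn //; by rewrite ler_nat.
apply: ltW; rewrite -[X in _ < X]invrK ltf_pV2 ?posrE ?invr_gt0 //.
Qed.


Definition SB (tau : R) := [set beta s ((1 + rhoB s) * tau) | s in [set s : R | 0 <= s]].

Definition bT (a tau : R) :=
  (if `[< has_ubound (SB tau) >] then Num.min (sigma a) (sup (SB tau)) else sigma a)
  + a / (1 + tau).

Lemma SB_n0 tau : SB tau !=set0.
Proof. exists (beta 0 ((1 + rhoB 0) * tau)); exists 0 => //=. Qed.

Lemma SB_sup_ge0 tau : 0 <= tau -> has_ubound (SB tau) -> 0 <= sup (SB tau).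
Proof.
move=> t0 hu.
have h0 : SB tau (beta 0 ((1 + rhoB 0) * tau)) by rewrite /SB; exists 0 => /=.
apply: le_trans (sup_upper_bound (conj (SB_n0 tau) hu) h0).
apply: (KL_ge0 Hb (lexx (0:R))); apply: mulr_ge0 => //; have := rhoB_ge0 0; lra.
Qed.

Lemma bT_KL : classKL bT.
Proof.
split.
  move=> tau t0; have t1 : 0 < 1 + tau by lra.
  split; first split.
  - rewrite /bT; apply: wD; last by apply: continuous_subspaceT; exact: lin_cont.
    case: asboolP => _; last exact: classN_cont Hs.
    by apply: wmin; exact: classN_cont Hs.
  - split.
      rewrite /bT (classN0 Hs) mul0r addr0.
      case: asboolP => // hu; apply/min_idPl; exact: SB_sup_ge0.
    split.
      move=> x x0; apply: addr_ge0; last exact: divr_ge0 (ltW t1).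
      case: asboolP => [hu|_]; last exact: classN_ge0 Hs x0.
      by rewrite le_min classN_ge0 // SB_sup_ge0.
    move=> x y x0 xy; rewrite /bT; apply: lerD; last by apply: ler_wpM2r => //; rewrite invr_ge0 ltW.
    case: asboolP => _; last exact: classN_le Hs x0 xy.
    by apply: le_min2 => //; exact: classN_le Hs x0 xy.
  move=> x y x0 xy; rewrite /bT; apply: ler_ltD; last by rewrite ltr_pM2r // invr_gt0.
  case: asboolP => _; last exact: classN_le Hs x0 (ltW xy).
  by apply: le_min2 => //; exact: classN_le Hs x0 (ltW xy).
move=> a a0; split.
  move=> t1 t2 t10 t12; rewrite /bT; apply: lerD; last by apply: div_le_anti => //; lra.
  have hle : forall s, 0 <= s -> beta s ((1 + rhoB s) * t2) <= beta s ((1 + rhoB s) * t1).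
    move=> s s0; have r0 := rhoB_ge0 s.
    apply: (KL_let Hb s0); first by apply: mulr_ge0 => //; lra.
    by apply: ler_wpM2l => //; lra.
  have sub : SB t2 `<=` down (SB t1).
    move=> _ [s s0 <-]; exists (beta s ((1 + rhoB s) * t1)); split.
      by rewrite /SB; exists s.
    exact: hle.
  case: (asboolP (has_ubound (SB t1))) => h1; case: (asboolP (has_ubound (SB t2))) => h2.
  - apply: le_min2 => //; apply: sup_le => //; first exact: SB_n0.
    exact: (conj (SB_n0 t1) h1).
  - exfalso; apply: h2; case: h1 => M hM; exists M => _ [s s0 <-].
    apply: le_trans (hle s s0) _; apply: hM; by rewrite /SB; exists s.
  - by rewrite ge_min lexx.
  - by [].
apply: lim_of.
  move=> t t0; apply: addr_ge0; last by apply: divr_ge0 => //; lra.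
  case: asboolP => [hu|_]; last exact: classN_ge0 Hs a0.
  by rewrite le_min classN_ge0 // SB_sup_ge0.
move=> e e0; have e2 : 0 < e / 2 by apply: divr_gt0.
have [T [T0 HT]] := unif e2.
exists (Num.max T (Num.max 0 (2 * a / e))) => t; rewrite !ge_max => /andP[Tt /andP[t0 st]].
have ub : ubound (SB t) (e / 2) by move=> _ [s s0 <-]; exact: HT.
have h1 : has_ubound (SB t) by exists (e / 2).
have h2 : sup (SB t) <= e / 2 by apply: ge_sup => //; exact: SB_n0.
have h3 : a / (1 + t) <= e / 2.
  rewrite ler_pdivrMr; last lra.
  move: st; rewrite ler_pdivrMr // => st.
  have : 0 <= e * t by apply: mulr_ge0; lra.
  nra.
rewrite /bT; case: asboolP => // _.
have : Num.min (sigma a) (sup (SB t)) <= sup (SB t) by rewrite ge_min lexx orbT.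
lra.
Qed.

Lemma bT_bound s a t : 0 <= s -> 0 <= a -> 0 <= t ->
  Num.min (beta s t) (sigma a) <= bT a (t / (1 + rhoB s)).
Proof.
move=> s0 a0 t0; set tau := t / (1 + rhoB s).
have r0 := rhoB_ge0 s.
have d0 : 1 + rhoB s != 0 by rewrite gt_eqF //; lra.
have tau0 : 0 <= tau by apply: divr_ge0 => //; lra.
have et : (1 + rhoB s) * tau = t by rewrite /tau mulrC divfK.
have inS : SB tau (beta s t) by rewrite /SB; exists s => //=; rewrite et.
have h4 : 0 <= a / (1 + tau) by apply: divr_ge0 => //; lra.
rewrite /bT; case: asboolP => [hu|_].
  have hs : beta s t <= sup (SB tau) by apply: sup_upper_bound => //; split => //; exact: SB_n0.
  have : Num.min (beta s t) (sigma a) <= Num.min (sigma a) (sup (SB tau)).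
    by rewrite le_min !ge_min lexx orbT /= hs.
  lra.
have : Num.min (beta s t) (sigma a) <= sigma a by rewrite ge_min lexx orbT.
lra.
Qed.

End PartB.

Unset Implicit Arguments.
Local Close Scope classical_set_scope.

Theorem proposition3p2 (R : realType) (theta : R) (n m p : nat)
  (f : (R -> 'rV[R]_n) -> 'rV[R]_m -> 'rV[R]_n)
  (h : (R -> 'rV[R]_n) -> 'rV[R]_p) :
  system_assumptions theta f h ->
  forward_complete theta f ->
  (OL_IOS theta f h <->
   exists (beta : R -> R -> R) (rho gamma : R -> R),
     classKL beta /\ classN rho /\ classN gamma /\
     forall xi u x r, inX theta xi -> inM u -> unorm u = r%:E ->
       is_solution theta f xi u x -> forall t, 0 <= t ->
       enorm (h (seg x t)) <=
         beta (enorm (h xi)) (t / (1 + rho (xnorm theta xi))) + gamma r).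
Proof.
move=> [th0 [_ [_ [_ [_ [_ [pi [Hp hpi]]]]]]]] fc; split.
  move=> [[_ [beta [gam [Hb [Hg Hios]]]]] [sig [Hs Hol]]].
  exists (bT sig Hb), (rhoB Hb), (fun x => gam x + sig x).
  split; first exact: bT_KL.
  split; first exact: rhoB_N.
  split; first exact: classN_add.
  move=> xi u x r Xi Mu ur sol t t0.
  have r0 := unorm_ge0 ur.
  have s0 := xnorm_ge0 xi th0.
  have a0 := enorm_ge0 (h xi).
  have h1 := Hios xi u x r Xi Mu ur sol t t0.
  have h2 := Hol xi u x r Xi Mu ur sol t t0.
  have h3 := bT_bound sig Hb s0 a0 t0.
  have g0 := classN_ge0 Hg r0.
  have sr0 := classN_ge0 Hs r0.
  have sa0 := classN_ge0 Hs a0.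
  have b0 := KL_ge0 Hb s0 t0.
  have [hle|hlt] := leP (sig (enorm (h xi))) (sig r).
    rewrite (max_r hle) in h2.
    have : 0 <= Num.min (beta (xnorm theta xi) t) (sig (enorm (h xi))).
      by rewrite le_min b0 sa0.
    lra.
  rewrite (max_l (ltW hlt)) in h2.
  have [hb|hb] := leP (beta (xnorm theta xi) t) (sig (enorm (h xi))).
    rewrite (min_l hb) in h3; lra.
  rewrite (min_r (ltW hb)) in h3; lra.
move=> [bh [rho [gam [Hb [Hr [Hg Hest]]]]]].
split.
  split; first exact: fc.
  exists (betaA bh rho pi), gam.
  split; first exact: betaA_KL.
  split; first exact: Hg.
  move=> xi u x r Xi Mu ur sol t t0.
  apply: le_trans (Hest xi u x r Xi Mu ur sol t t0) _.
  apply: lerD => //.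
  apply: betaA_bound => //; [exact: xnorm_ge0|exact: enorm_ge0|exact: hpi].
have HbN : classN (fun x => bh x 0) := proj1 (KL_K Hb (lexx (0:R))).
exists (fun x => (bh x 0 + gam x) + (bh x 0 + gam x)).
split; first by apply: classN_add; apply: classN_add.
move=> xi u x r Xi Mu ur sol t t0.
have r0 := unorm_ge0 ur.
have s0 := xnorm_ge0 xi th0.
have a0 := enorm_ge0 (h xi).
have h1 := Hest xi u x r Xi Mu ur sol t t0.
have r1 : 0 <= rho (xnorm theta xi) := classN_ge0 Hr s0.
have tau0 : 0 <= t / (1 + rho (xnorm theta xi)) by apply: divr_ge0 => //; lra.
have h2 := KL_let Hb a0 (lexx 0) tau0.
have g0 := classN_ge0 Hg r0.
have ga0 := classN_ge0 Hg a0.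
have br0 := KL_ge0 Hb r0 (lexx 0).
have ba0 := KL_ge0 Hb a0 (lexx 0).
rewrite le_max; apply/orP.
have [hl|hl] := leP (bh (enorm (h xi)) 0) (gam r).
  right; lra.
left; lra.
Qed.
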